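(* Let $n\ge 1$, let $w_n\ge\dots\ge w_1>0$ be real weights and let $B\in\{1,\dots,n\}$. Consider RLS (defined in the context) minimising the penalised fitness \[ f(x)=\sum_{i=1}^n w_i x_i+\max\{0,\,B-b(x)\}\cdot(n w_n+1),\qquad b(x)=\sum_{i=1}^n x_i . \] Starting with an arbitrary initial search point, the expected optimisation time of RLS is $O(n^2)$, where the hidden constant does not depend on $n$, the weights, or $B$.
   Context: Problem: minimise $f_{\mathrm{obj}}(x)=\sum_{i=1}^n w_ix_i$ over $x\in\{0,1\}^n$ subject to $x_1+\dots+x_n\ge B$. A search point is optimal if it satisfies the constraint and minimises $f_{\mathrm{obj}}$ among all points satisfying the constraint. RLS: maintain a current search point $x_t$; in each iteration choose $b\in\{1,2\}$ uniformly at random, create $x'$ by flipping $b$ distinct bits of $x_t$ chosen uniformly at random; set $x_{t+1}=x'$ if $f(x')\le f(x_t)$, otherwise $x_{t+1}=x_t$. The optimisation time is the number of iterations until an optimal search point has been sampled for the first time. *)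

(* Defs.v *)
From mathcomp Require Import all_boot all_order all_algebra.
Set Implicit Arguments. Unset Strict Implicit. Unset Printing Implicit Defensive.
Import Order.TTheory GRing.Theory Num.Theory.
Local Open Scope ring_scope.

Section RLS.
Variables (R : realFieldType) (n : nat).

(* Search points x in {0,1}^n; bit i (0-based) is x_{i+1}. *)
Definition point := {ffun 'I_n -> bool}.

Definition ones (x : point) : nat := #|[set i | x i]|.

(* Weights w : nat -> R, used at indices 1..n (w_i = w i). *)
Definition fobj (w : nat -> R) (x : point) : R :=
  \sum_(i < n) (x i)%:R * w i.+1.

(* penalised fitness f(x) = fobj(x) + max{0, B - b(x)} * (n w_n + 1);
   max{0, B - b(x)} is the truncated natural subtraction. *)
Definition fpen (w : nat -> R) (B : nat) (x : point) : R :=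
  fobj w x + (B - ones x)%N%:R * (n%:R * w n + 1).

Definition feasible (B : nat) (x : point) : bool := (B <= ones x)%N.

Definition optimal (w : nat -> R) (B : nat) (x : point) : bool :=
  feasible B x && [forall y : point, feasible B y ==> (fobj w x <= fobj w y)].

Definition hamming (x y : point) : nat := #|[set i | x i != y i]|.

(* Probability that flipping b distinct uniformly chosen bits of x gives y.
   Convention: if there is no set of b distinct positions ('C(n,b) = 0,
   i.e. n = 1, b = 2) nothing is flipped. *)
Definition mutb (b : nat) (x y : point) : R :=
  if 'C(n, b) == 0%N then (y == x)%:R
  else (hamming x y == b)%:R / 'C(n, b)%:R.

Definition mut (x y : point) : R := (mutb 1 x y + mutb 2 x y) / 2.

Definition rls_step (f : point -> R) (x y : point) : R :=
  \sum_(z : point) mut x z *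
     (if f z <= f x then (y == z)%:R else (y == x)%:R).

(* surv w B x0 t y = Pr[x_t = y and none of x_0..x_t is optimal],
   for RLS on fpen w B started in x0. *)
Fixpoint surv (w : nat -> R) (B : nat) (x0 : point) (t : nat) (y : point) : R :=
  match t with
  | 0 => ((y == x0) && ~~ optimal w B y)%:R
  | t'.+1 => (~~ optimal w B y)%:R *
             \sum_(x : point) surv w B x0 t' x * rls_step (fpen w B) x y
  end.

(* Pr[T > t], T the optimisation time *)
Definition not_hit (w : nat -> R) (B : nat) (x0 : point) (t : nat) : R :=
  \sum_(y : point) surv w B x0 t y.

End RLS.

(* Main.v *)
Require Import Defs.
From mathcomp Require Import all_boot all_order all_algebra.
From mathcomp Require Import zify ring lra.
Set Implicit Arguments. Unset Strict Implicit. Unset Printing Implicit Defensive.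
Import Order.TTheory GRing.Theory Num.Theory.
Local Open Scope ring_scope.

Section Basics.
Variables (R : realFieldType) (n : nat).
Local Notation point := (point n).
Local Notation mutb := (@Defs.mutb R n).
Local Notation mut := (@Defs.mut R n).

Definition flipS (S : {set 'I_n}) (x : point) : point := [ffun k => (k \in S) (+) x k].
Definition diffs (x z : point) : {set 'I_n} := [set i | x i != z i].

Lemma flipS_diffs x z : flipS (diffs x z) x = z.
Proof. by apply/ffunP=> k; rewrite ffunE inE; case: (x k); case: (z k). Qed.

Lemma diffs_flipS S x : diffs x (flipS S x) = S.
Proof. by apply/setP=> k; rewrite inE ffunE; case: (k \in S); case: (x k). Qed.

Lemma hamming_diffs x z : hamming x z = #|diffs x z|.
Proof. by []. Qed.

Lemma hamming_flipS S x : hamming x (flipS S x) = #|S|.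
Proof. by rewrite hamming_diffs diffs_flipS. Qed.

Lemma sum_flipS (F : bool -> 'I_n -> R) S x :
  \sum_k F (flipS S x k) k =
  \sum_k F (x k) k + \sum_(k in S) (F (~~ x k) k - F (x k) k).
Proof.
rewrite (bigID (mem S)) [X in _ = X + _](bigID (mem S)) /=.
rewrite sumrB.
have -> : \sum_(i in S) F (flipS S x i) i = \sum_(i in S) F (~~ x i) i.
  by apply: eq_bigr => i iS; rewrite ffunE iS.
have -> : \sum_(i | i \notin S) F (flipS S x i) i = \sum_(i | i \notin S) F (x i) i.
  by apply: eq_bigr => i iS; rewrite ffunE (negbTE iS).
by rewrite [LHS]addrC; ring.
Qed.

Lemma sum_set1 (G : 'I_n -> R) i : \sum_(k in [set i]) G k = G i.
Proof. by rewrite big_set1. Qed.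

Lemma sum_set2 (G : 'I_n -> R) i j : i != j -> \sum_(k in [set i; j]) G k = G i + G j.
Proof. by move=> ij; rewrite big_setU1 ?inE // big_set1. Qed.

Lemma mutb_ge0 b x z : 0 <= mutb b x z.
Proof. by rewrite /mutb; case: ifP => _ //; rewrite divr_ge0. Qed.

Lemma mut_ge0 x z : 0 <= mut x z.
Proof. by rewrite /mut divr_ge0 // addr_ge0 // mutb_ge0. Qed.

Lemma sum_eq1 (F : point -> R) z : \sum_y F y * (y == z)%:R = F z.
Proof.
rewrite (bigD1 z) //= eqxx mulr1 big1 ?addr0 // => y /negbTE ->; by rewrite mulr0.
Qed.

Lemma count_ham (x : point) b : \sum_z ((hamming x z == b)%:R : R) = ('C(n, b))%:R.
Proof.
rewrite (reindex (fun S => flipS S x)); last first.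
  by exists (diffs x) => z _; rewrite ?diffs_flipS ?flipS_diffs.
under eq_bigr do rewrite hamming_flipS.
rewrite -natr_sum; congr (_%:R).
have := card_draws 'I_n b; rewrite card_ord => <-.
rewrite -sum1_card [RHS]big_mkcond /=; apply: eq_bigr => S _.
by rewrite inE; case: (_ == _).
Qed.

Lemma sum_mutb b x : \sum_z mutb b x z = 1.
Proof.
rewrite /mutb; case: eqP => C0.
  rewrite (bigD1 x) //= eqxx big1 ?addr0 // => y /negbTE -> //.
by rewrite -mulr_suml count_ham divff // pnatr_eq0; apply/eqP.
Qed.

Lemma sum_mut x : \sum_z mut x z = 1.
Proof.
rewrite /mut -mulr_suml big_split /= !sum_mutb.
by rewrite divff // (_ : 1 + 1 = 2%:R :> R) // pnatr_eq0.
Qed.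

Lemma mut_neq0 x z : mut x z != 0 ->
  z = x \/ hamming x z = 1%N \/ hamming x z = 2%N.
Proof.
move=> H; case: (eqVneq z x) => [->|zx]; [by left|right].
case: (eqVneq (hamming x z) 1%N) => [->|h1]; [by left|right].
case: (eqVneq (hamming x z) 2%N) => [->//|h2].
move: H; rewrite /mut /mutb (negbTE zx) (negbTE h1) (negbTE h2).
by case: ifP; case: ifP; rewrite /= ?mul0r ?addr0 ?mul0r ?eqxx.
Qed.

Lemma mut_ham1 x z : hamming x z = 1%N -> 1 <= (2 * n)%:R * mut x z.
Proof.
move=> h; have n0 : (0 < n)%N.
  by have := max_card (mem (diffs x z)); rewrite -hamming_diffs h card_ord.
have nR : n%:R != 0 :> R by rewrite pnatr_eq0 -lt0n.
have m1 : mutb 1 x z = n%:R^-1.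
  by rewrite /mutb bin1 h eqxx (negbTE (lt0n_neq0 n0)) mul1r.
have m2 := mutb_ge0 2 x z.
rewrite /mut m1 natrM.
have -> : 2%:R * n%:R * ((n%:R^-1 + mutb 2 x z) / 2) = 1 + n%:R * mutb 2 x z :> R.
  by field; rewrite nR.
by rewrite lerDl mulr_ge0.
Qed.

Lemma mut_ham2 x z : hamming x z = 2%N -> 1 <= (n ^ 2)%N%:R * mut x z.
Proof.
move=> h; have n2 : (2 <= n)%N.
  by have := max_card (mem (diffs x z)); rewrite -hamming_diffs h card_ord.
have C0 : 'C(n, 2) != 0%N by rewrite -lt0n bin_gt0.
have CR : 'C(n, 2)%:R != 0 :> R by rewrite pnatr_eq0.
have m2 : mutb 2 x z = 'C(n, 2)%:R^-1.
  by rewrite /mutb h eqxx (negbTE C0) mul1r.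
have m1 := mutb_ge0 1 x z.
have hC : ('C(n, 2) * 2 <= n ^ 2)%N.
  rewrite bin2 muln2 halfK; apply: leq_trans (leq_subr _ _) _.
  by rewrite -mulnn leq_mul2l leq_pred orbT.
rewrite /mut m2.
have hC' : 'C(n, 2)%:R * 2 <= (n ^ 2)%N%:R :> R.
  by rewrite -natrM ler_nat.
have Cp : 0 < 'C(n, 2)%:R :> R by rewrite ltr0n lt0n.
apply: (le_trans _ (_ : (n ^ 2)%N%:R * ('C(n, 2)%:R^-1 / 2) <= _)).
  rewrite mulrA ler_pdivlMr ?mul1r ?mulr_gt0 //.
  by rewrite ler_pdivlMr // mulrC.
apply: ler_wpM2l; [by rewrite ler0n | lra].
Qed.

Lemma single_bound x z1 (E : pred point) :
  hamming x z1 = 1%N -> E z1 -> 1 <= (2 * n)%:R * \sum_(z | E z) mut x z.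
Proof.
move=> h e; apply: le_trans (mut_ham1 h) _; apply: ler_wpM2l; first by rewrite ler0n.
rewrite (bigD1 z1) //= lerDl; apply: sumr_ge0 => *; exact: mut_ge0.
Qed.

Lemma pair_bound x (k : nat) (AC : {set 'I_n * 'I_n}) (h : 'I_n * 'I_n -> point)
  (E : pred point) :
  (0 < k)%N -> (k * k <= #|AC|)%N -> {in AC &, injective h} ->
  (forall p, p \in AC -> hamming x (h p) = 2%N /\ E (h p)) ->
  1 <= (n ^ 2)%N%:R / (k ^ 2)%N%:R * \sum_(z | E z) mut x z.
Proof.
move=> k0 hk inj hp.
have n0 : (0 < n)%N.
  case: (set_0Vmem AC) => [A0|[p pA]]; first by move: hk; rewrite A0 cards0; case: k k0.
  have [h2 _] := hp p pA.
  by have := max_card (mem (diffs x (h p))); rewrite -hamming_diffs h2 card_ord; case: n.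
have S1 : \sum_(z in [set h p | p in AC]) mut x z <= \sum_(z | E z) mut x z.
  rewrite [X in _ <= X]big_mkcond [X in X <= _]big_mkcond /=; apply: ler_sum => z _.
  case: (boolP (z \in _)) => [/imsetP [p pA ->]|_]; last by case: (E z); rewrite ?mut_ge0.
  by have [_ ->] := hp p pA.
rewrite big_imset //= in S1.
have S2 : (#|AC|)%:R / (n ^ 2)%N%:R <= \sum_(p in AC) mut x (h p).
  rewrite -sum1_card natr_sum mulr_suml; apply: ler_sum => p pA.
  have [h2 _] := hp p pA; have := mut_ham2 h2.
  have np : 0 < (n ^ 2)%N%:R :> R by rewrite ltr0n expn_gt0 n0.
  by rewrite ler_pdivrMr // mulrC.
have np : 0 < (n ^ 2)%N%:R :> R by rewrite ltr0n expn_gt0 n0.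
have kp : 0 < (k ^ 2)%N%:R :> R by rewrite ltr0n expn_gt0 k0.
have hkR : (k ^ 2)%N%:R <= (#|AC|)%:R :> R by rewrite ler_nat -mulnn.
apply: le_trans (_ : 1 <= (n ^ 2)%N%:R / (k ^ 2)%N%:R * ((#|AC|)%:R / (n ^ 2)%N%:R)) _.
  have -> : (n ^ 2)%N%:R / (k ^ 2)%N%:R * ((#|AC|)%:R / (n ^ 2)%N%:R) = (#|AC|)%:R / (k ^ 2)%N%:R :> R.
    by field; rewrite !pnatr_eq0 -!lt0n k0 n0.
  by rewrite ler_pdivlMr // mul1r.
apply: ler_wpM2l; first by rewrite divr_ge0 ?ler0n.
exact: le_trans S2 S1.
Qed.

Lemma perx (m h : point -> R) (E : pred point) (gx c : R) :
  (forall z, 0 <= m z) -> \sum_z m z = 1 -> 0 <= gx ->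
  (forall z, m z != 0 -> h z <= gx - (E z)%:R * c) ->
  1 <= c * \sum_(z | E z) m z -> \sum_z m z * h z <= gx - 1.
Proof.
move=> m0 m1 g0 hb hp.
apply: le_trans (_ : _ <= \sum_z (m z * gx - c * (m z * (E z)%:R))) _.
  apply: ler_sum => z _; case: (eqVneq (m z) 0) => [->|nz].
    by rewrite !mul0r mulr0 subr0.
  apply: le_trans (_ : _ <= m z * (gx - (E z)%:R * c)) _.
    by apply: ler_wpM2l; [apply: m0 | apply: hb].
  by rewrite le_eqVlt; apply/orP; left; apply/eqP; ring.
rewrite sumrB -mulr_suml -mulr_sumr m1 mul1r.
have -> : \sum_z m z * (E z)%:R = \sum_(z | E z) m z.
  by rewrite [RHS]big_mkcond; apply: eq_bigr => z _; case: (E z); rewrite ?mulr1 ?mulr0.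
lra.
Qed.

End Basics.

Section Drift.
Variables (R : realFieldType) (n : nat) (w : nat -> R) (B : nat).
Local Notation point := (point n).
Local Notation mut := (@Defs.mut R n).
Local Notation f := (fpen w B).
Local Notation opt := (optimal w B).
Implicit Types x y z : point.

Lemma rls_ge0 (F : point -> R) x y : 0 <= rls_step F x y.
Proof.
by apply: sumr_ge0 => z _; apply: mulr_ge0; rewrite ?mut_ge0 //; case: ifP.
Qed.

Lemma surv_ge0 (x0 : point) t y : 0 <= surv w B x0 t y.
Proof.
elim: t y => [|t IH] y /=; first by [].
apply: mulr_ge0 => //; apply: sumr_ge0 => x _; apply: mulr_ge0 => //.
exact: rls_ge0.
Qed.

Lemma surv_opt (x0 : point) t y : opt y -> surv w B x0 t y = 0.
Proof. by case: t => [|t] /= ->; rewrite ?andbF ?mul0r. Qed.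

Lemma step_sum (K : point -> R) x :
  \sum_y K y * rls_step f x y =
  \sum_z mut x z * (if f z <= f x then K z else K x).
Proof.
rewrite /rls_step; under eq_bigr do rewrite mulr_sumr; rewrite exchange_big.
apply: eq_bigr => z _.
under eq_bigr do rewrite mulrCA; rewrite -mulr_sumr; congr (_ * _).
by case: ifP => _; rewrite sum_eq1.
Qed.

Definition Phi (g : point -> R) (x0 : point) t := \sum_y surv w B x0 t y * g y.

Lemma Phi_step (g : point -> R) (x0 : point) t :
  (forall x, ~~ opt x ->
     \sum_z mut x z * (if f z <= f x then (~~ opt z)%:R * g z else g x) <= g x - 1) ->
  Phi g x0 t.+1 <= Phi g x0 t - not_hit w B x0 t.
Proof.
move=> H.
rewrite /Phi /not_hit /= -sumrB.
have -> : \sum_y (~~ opt y)%:R * (\sum_x surv w B x0 t x * rls_step f x y) * g y =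
  \sum_x surv w B x0 t x * \sum_y ((~~ opt y)%:R * g y) * rls_step f x y.
  under eq_bigr do rewrite mulr_sumr mulr_suml.
  rewrite exchange_big; apply: eq_bigr => x _; rewrite mulr_sumr.
  by apply: eq_bigr => y _; ring.
apply: ler_sum => x _.
case: (boolP (opt x)) => ox.
  by rewrite surv_opt // !mul0r subr0.
rewrite step_sum.
have -> : forall a b : R, a * b - a = a * (b - 1) by move=> a b; ring.
apply: ler_wpM2l; first exact: surv_ge0.
apply: le_trans (H x ox); rewrite le_eqVlt; apply/orP; left; apply/eqP.
by apply: eq_bigr => z _; case: ifP => // _; rewrite ox mul1r.
Qed.

Lemma drift (g : point -> R) (x0 : point) N :
  (forall x, 0 <= g x) ->
  (forall x, ~~ opt x ->
     \sum_z mut x z * (if f z <= f x then (~~ opt z)%:R * g z else g x) <= g x - 1) ->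
  \sum_(t < N) not_hit w B x0 t <= g x0.
Proof.
move=> g0 H.
have tel : forall N, \sum_(t < N) not_hit w B x0 t <= Phi g x0 0 - Phi g x0 N.
  elim=> [|M IH]; first by rewrite big_ord0 subrr.
  rewrite big_ord_recr /=.
  have := Phi_step x0 M H; lra.
apply: le_trans (tel N) _.
have PN : 0 <= Phi g x0 N by apply: sumr_ge0 => y _; rewrite mulr_ge0 ?surv_ge0.
have P0 : Phi g x0 0 <= g x0.
  rewrite /Phi -(sum_eq1 g x0); apply: ler_sum => y _ /=.
  case: (eqVneq y x0) => [->|]; rewrite /= ?mul0r ?mulr0 //.
  by case: (opt x0); rewrite /= ?mul0r ?mul1r ?mulr1.
lra.
Qed.

End Drift.

Section Problem.
Variables (R : realFieldType) (n : nat) (w : nat -> R) (B : nat).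
Hypotheses (Hn : (1 <= n)%N) (Hw1 : 0 < w 1%N)
  (Hmono : forall i j : nat, (1 <= i)%N -> (i <= j)%N -> (j <= n)%N -> w i <= w j)
  (HB1 : (1 <= B)%N) (HBn : (B <= n)%N).
Local Notation point := (point n).
Local Notation mut := (@Defs.mut R n).
Local Notation f := (fpen w B).
Local Notation opt := (optimal w B).
Implicit Types x y z : point.

Definition W (i : 'I_n) := w i.+1.
Definition tB := w B.
Definition K := n%:R * w n + 1.

Lemma W_mono (i j : 'I_n) : (i <= j)%N -> W i <= W j.
Proof. by move=> ij; apply: Hmono. Qed.
Lemma W_pos i : 0 < W i.
Proof. by apply: lt_le_trans Hw1 _; apply: Hmono. Qed.
Lemma W_le i : W i <= w n.
Proof. by apply: Hmono. Qed.
Lemma wn_pos : 0 < w n.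
Proof. by apply: lt_le_trans Hw1 _; apply: Hmono. Qed.

Definition QF (F : bool -> 'I_n -> R) x := \sum_k F (x k) k.

Lemma QF_flip1 F x i :
  QF F (flipS [set i] x) = QF F x + (F (~~ x i) i - F (x i) i).
Proof. by rewrite /QF sum_flipS sum_set1. Qed.

Lemma QF_flip2 F x i j : i != j ->
  QF F (flipS [set i; j] x) = QF F x + (F (~~ x i) i - F (x i) i)
     + (F (~~ x j) j - F (x j) j).
Proof. by move=> ij; rewrite /QF sum_flipS sum_set2 // addrA. Qed.

Definition cnt (P : bool -> 'I_n -> bool) x := #|[set i | P (x i) i]|.

Lemma cntR P x : (cnt P x)%:R = QF (fun v k => (P v k)%:R) x.
Proof.
rewrite /cnt /QF -sum1_card natr_sum big_mkcond /=; apply: eq_bigr => i _.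
by rewrite inE; case: (P _ _).
Qed.

Definition Fones := fun (v : bool) (k : 'I_n) => (v%:R : R).
Definition Fobj := fun (v : bool) (k : 'I_n) => v%:R * W k.
Definition Pa := fun (v : bool) (k : 'I_n) => v && (tB < W k).
Definition Pb := fun (v : bool) (k : 'I_n) => ~~ v && (W k < tB).
Definition av x := cnt Pa x.
Definition bv x := cnt Pb x.

Lemma onesR x : (ones x)%:R = QF Fones x.
Proof. by rewrite -(cntR (fun v _ => v)). Qed.
Lemma fobjQ x : fobj w x = QF Fobj x.
Proof. by []. Qed.

Lemma cnt_le P x : (cnt P x <= n)%N.
Proof. by rewrite /cnt -[X in (_ <= X)%N]card_ord max_card. Qed.

Lemma fobj_ge0 x : 0 <= fobj w x.
Proof. by apply: sumr_ge0 => i _; rewrite mulr_ge0 // ltW // W_pos. Qed.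

Lemma fobj_le x : fobj w x <= n%:R * w n.
Proof.
apply: le_trans (_ : _ <= \sum_(i < n) w n) _.
  apply: ler_sum => i _; apply: le_trans (W_le i); rewrite -[X in _ <= X]mul1r.
  by apply: ler_wpM2r; [rewrite ltW // W_pos | case: (x i)].
by rewrite sumr_const card_ord mulr_natl.
Qed.

Lemma fpenE x : f x = fobj w x + (B - ones x)%N%:R * K.
Proof. by []. Qed.

Lemma local_moves x z : mut x z != 0 ->
  z = x \/ (exists i, z = flipS [set i] x) \/
  (exists i j, i != j /\ z = flipS [set i; j] x).
Proof.
move=> /mut_neq0 [->|[h|h]]; [by left | right; left | right; right].
  have /cards1P [i Hi] : #|diffs x z| == 1%N by rewrite -hamming_diffs h.
  by exists i; rewrite -Hi flipS_diffs.
have /cards2P [i [j [ij Hij]]] : #|diffs x z| == 2%N by rewrite -hamming_diffs h.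
by exists i, j; split => //; rewrite -Hij flipS_diffs.
Qed.

Lemma b2R_le (b1 b2 : bool) : (b1 -> b2) -> (b1%:R <= b2%:R :> R).
Proof. by case: b1; case: b2 => // /(_ isT). Qed.

Lemma L1 x z : mut x z != 0 -> (ones x < ones z)%N -> fobj w x < fobj w z.
Proof.
move=> /local_moves [->|[[i ->]|[i [j [ij ->]]]]]; first by rewrite ltnn.
  rewrite -(ltr_nat R) !onesR !fobjQ !QF_flip1 /Fones /Fobj.
  have := W_pos i; case: (x i) => /=; lra.
rewrite -(ltr_nat R) !onesR !fobjQ !QF_flip2 // /Fones /Fobj.
have := W_pos i; have := W_pos j; case: (x i); case: (x j) => /=; lra.
Qed.

Lemma L2 x z : mut x z != 0 -> ones z = ones x -> fobj w z <= fobj w x ->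
  (av z <= av x)%N /\ (bv z <= bv x)%N.
Proof.
rewrite /av /bv.
move=> /local_moves [->|[[i ->]|[i [j [ij ->]]]]]; first by [].
  move/(congr1 (fun m => m%:R : R)); rewrite !onesR QF_flip1 /Fones.
  case: (x i) => /=; lra.
move/(congr1 (fun m => m%:R : R)); rewrite !onesR !fobjQ !QF_flip2 // /Fones /Fobj.
rewrite -!(ler_nat R) !cntR !QF_flip2 // /Pa /Pb.
case Exi: (x i); case Exj: (x j) => /=; rewrite ?mul1r ?mul0r; try lra.
- move=> _ hW0; have hW : W j <= W i by lra.
  have h1 := @b2R_le (tB < W j) (tB < W i) (fun h => lt_le_trans h hW).
  have h2 := @b2R_le (W i < tB) (W j < tB) (fun h => le_lt_trans hW h).
  split; lra.
- move=> _ hW0; have hW : W i <= W j by lra.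
  have h1 := @b2R_le (tB < W i) (tB < W j) (fun h => lt_le_trans h hW).
  have h2 := @b2R_le (W j < tB) (W i < tB) (fun h => le_lt_trans hW h).
  split; lra.
Qed.


Definition phi x : nat :=
  if (ones x < B)%N then (3 * n + (B - ones x))%N
  else if (B < ones x)%N then (2 * n + (ones x - B))%N
  else if (0 < av x)%N then (n + av x)%N else bv x.

Lemma ones_le x : (ones x <= n)%N.
Proof. exact: (cnt_le (fun v _ => v)). Qed.

Lemma pen_gap x z : ((B - ones x).+1 <= B - ones z)%N -> f x < f z.
Proof.
move=> h; rewrite !fpenE.
have hR : (B - ones x)%N%:R + 1 <= (B - ones z)%N%:R :> R.
  by rewrite (_ : (1 : R) = 1%:R) // -natrD addn1 ler_nat.
have hK : 0 <= K.
  by rewrite /K; apply: addr_ge0 => //; apply: mulr_ge0; rewrite ?ler0n // ltW // wn_pos.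
have hp : 0 <= ((B - ones z)%N%:R - (B - ones x)%N%:R - 1) * K.
  by apply: mulr_ge0 => //; lra.
have := fobj_ge0 z; have := fobj_le x.
rewrite /K in hp *; lra.
Qed.

Lemma phi_feas z : (B <= ones z)%N -> (phi z <= 2 * n + (ones z - B))%N.
Proof.
move=> h; rewrite /phi ltnNge h /=.
have := cnt_le Pa z; have := cnt_le Pb z; rewrite /av /bv.
case: ifP => //; case: ifP => // *; lia.
Qed.

Lemma Mon x z : mut x z != 0 -> f z <= f x -> (phi z <= phi x)%N.
Proof.
move=> mz fz.
have gap : ~ ((B - ones x).+1 <= B - ones z)%N.
  by move=> /pen_gap; rewrite ltNge fz.
have oz := ones_le z; have ox := ones_le x.
case: (ltnP (ones x) B) => hx.
  have -> : phi x = (3 * n + (B - ones x))%N by rewrite /phi hx.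
  case: (ltnP (ones z) B) => hz.
    by rewrite /phi hz; lia.
  by have := phi_feas hz; lia.
have hz : (B <= ones z)%N by lia.
have fxE : f x = fobj w x by rewrite fpenE (_ : (B - ones x)%N = 0%N) ?mul0r ?addr0 //; lia.
have fzE : f z = fobj w z by rewrite fpenE (_ : (B - ones z)%N = 0%N) ?mul0r ?addr0 //; lia.
have hzx : (ones z <= ones x)%N.
  rewrite leqNgt; apply/negP => /(L1 mz); rewrite -fxE -fzE ltNge fz //.
case: (ltnP B (ones x)) => hx2.
  have -> : phi x = (2 * n + (ones x - B))%N by rewrite /phi ltnNge hx /= hx2.
  by have := phi_feas hz; lia.
have eB : ones x = B by lia.
have ez : ones z = ones x by lia.
have [ha hb] := L2 mz ez (ltac:(by rewrite -fxE -fzE)).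
have := cnt_le Pb z; have := cnt_le Pa z; rewrite /av /bv in ha hb *.
rewrite /phi ez eB ltnn /=.
case: (ltnP 0 (av x)); case: (ltnP 0 (av z)); rewrite /av /bv => *; lia.
Qed.


Lemma tB_pos : 0 < tB.
Proof. by apply: lt_le_trans Hw1 _; apply: Hmono. Qed.

Lemma cnt0 P x : cnt P x = 0%N -> forall k, ~~ P (x k) k.
Proof.
move=> /cards0_eq h k; apply/negP => hk.
have : k \in [set i | P (x i) i] by rewrite inE.
by rewrite h inE.
Qed.

Lemma opt_of x : ones x = B -> av x = 0%N -> bv x = 0%N -> opt x.
Proof.
move=> ho ha hb; rewrite /optimal /feasible ho leqnn /=.
apply/forallP => y; apply/implyP => hy.
have Ha := cnt0 ha; have Hb := cnt0 hb.
have e : fobj w y - fobj w x =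
   \sum_k ((y k)%:R - (x k)%:R) * (W k - tB) + tB * (QF Fones y - QF Fones x).
  rewrite !fobjQ /QF /Fobj /Fones -!sumrB mulr_sumr -big_split /=.
  by apply: eq_bigr => k _; ring.
have s0 : 0 <= \sum_k ((y k)%:R - (x k)%:R) * (W k - tB).
  apply: sumr_ge0 => k _; have := Ha k; have := Hb k; rewrite /Pa /Pb.
  case: (x k); case: (y k) => /=; rewrite ?subrr ?mul0r // ?subr0 ?sub0r.
    by move=> _; rewrite -leNgt mulN1r oppr_ge0 subr_le0.
  by rewrite -leNgt mul1r subr_ge0.
have o : QF Fones x <= QF Fones y by rewrite -!onesR ler_nat ho.
have := tB_pos; rewrite -subr_ge0 e => *.
have : 0 <= tB * (QF Fones y - QF Fones x) by rewrite mulr_ge0 ?subr_ge0 // ltW.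
lra.
Qed.

Lemma card_split (P Q : pred 'I_n) :
  #|[set k | P k]| = (#|[set k | P k && Q k]| + #|[set k | P k && ~~ Q k]|)%N.
Proof.
rewrite -(cardsID [set k | Q k] [set k | P k]); congr addn.
  all: by apply: eq_card => k; rewrite !inE 1?andbC.
Qed.

Lemma card_eqP (P Q : pred 'I_n) : P =1 Q -> #|[set k | P k]| = #|[set k | Q k]|.
Proof. by move=> h; apply: eq_card => k; rewrite !inE h. Qed.

Lemma card_leW : (B <= #|[set k | (W k <= tB)%R]|)%N.
Proof.
have <- : #|[set widen_ord HBn k | k in 'I_B]| = B.
  by rewrite card_imset ?card_ord //; by move=> a b /(congr1 val) /= /val_inj.
apply: subset_leq_card; apply/subsetP => k /imsetP [j _ ->]; rewrite inE.
by apply: Hmono => //=; apply: ltn_ord.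
Qed.

Lemma card_ltW : (#|[set k | (W k < tB)%R]| <= B.-1)%N.
Proof.
have <- : #|[set widen_ord (leq_trans (leq_pred B) HBn) k | k in 'I_B.-1]| = B.-1.
  by rewrite card_imset ?card_ord //; by move=> a b /(congr1 val) /= /val_inj.
apply: subset_leq_card; apply/subsetP => k; rewrite inE => hk.
have kB : (k < B.-1)%N.
  rewrite ltnNge; apply/negP => hk2.
  have hle : tB <= W k.
    apply: Hmono => //.
    lia.
  by move: hk; rewrite ltNge hle.
by apply/imsetP; exists (Ordinal kB) => //; apply: val_inj.
Qed.


Definition cst (m : nat) : R :=
  if (m < n)%N then (n ^ 2)%N%:R / ((m.+1) ^ 2)%N%:R
  else if (m < 2 * n)%N then (n ^ 2)%N%:R / ((m.+1 - n) ^ 2)%N%:R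
  else (2 * n)%N%:R.

Definition G k := \sum_(0 <= m < k) cst m.
Definition gg x := G (phi x).

Lemma cst_ge0 m : 0 <= cst m.
Proof. by rewrite /cst; case: ifP => _; [|case: ifP => _]; rewrite ?divr_ge0 ?ler0n. Qed.

Lemma G_ge0 k : 0 <= G k.
Proof. by apply: sumr_ge0 => m _; apply: cst_ge0. Qed.

Lemma G_mono a b : (a <= b)%N -> G a <= G b.
Proof.
move=> ab; rewrite /G (big_cat_nat (leq0n a) ab) /= lerDl.
by apply: sumr_ge0 => m _; apply: cst_ge0.
Qed.

Lemma G_S k : G k.+1 = G k + cst k.
Proof. by rewrite /G big_nat_recr. Qed.

Lemma harm k : \sum_(0 <= m < k.+1) (((m.+1) ^ 2)%N%:R)^-1 <= 2 - (k.+1)%:R^-1 :> R.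
Proof.
elim: k => [|k IH].
  rewrite big_nat1 /=; lra.
rewrite big_nat_recr //=.
set a : R := (k.+1)%:R.
have ha : 0 < a by rewrite ltr0n.
have e1 : (k.+2)%:R = a + 1 :> R by rewrite /a -natr1.
have e2 : ((k.+2) ^ 2)%N%:R = (a + 1) * (a + 1) :> R by rewrite natrX e1 expr2.
rewrite e2 e1.
have : 0 <= a^-1 - (a + 1)^-1 - ((a + 1) * (a + 1))^-1.
  have -> : a^-1 - (a + 1)^-1 - ((a + 1) * (a + 1))^-1 = (a * (a + 1) * (a + 1))^-1.
    field; have : 0 <= k%:R :> R by rewrite ler0n.
    by move=> hk; apply/andP; split; apply/negP => /eqP h; lra.
  by rewrite invr_ge0 !mulr_ge0 // ltW // ltr_wpDl // ltW.
move: IH; rewrite -/a => IH h; move: IH h.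
move: (\sum_(0 <= m < k.+1) _) => S; move: (((a+1)*(a+1))^-1) => s.
move: ((a+1)^-1) => v; move: (a^-1) => u; lra.
Qed.

Lemma G_bound : G (4 * n) <= (8 * n ^ 2)%N%:R.
Proof.
have n1 := Hn.
rewrite /G (big_cat_nat (leq0n n) (_ : n <= 4 * n)%N) //=; last by lia.
rewrite (big_cat_nat (_ : n <= 2 * n)%N (_ : 2 * n <= 4 * n)%N) //=; try lia.
have S1 : \sum_(0 <= m < n) cst m = (n ^ 2)%N%:R * \sum_(0 <= m < n) (((m.+1) ^ 2)%N%:R)^-1.
  rewrite mulr_sumr big_nat_cond [RHS]big_nat_cond; apply: eq_bigr => m /andP [/andP [_ hm] _].
  by rewrite /cst hm.
have S2 : \sum_(n <= m < 2 * n) cst m = \sum_(0 <= m < n) cst m.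
  rewrite -{1}(add0n n) big_addn (_ : (2 * n - n)%N = n); last by lia.
  rewrite big_nat_cond [RHS]big_nat_cond; apply: eq_bigr => m /andP [/andP [_ hm] _].
  rewrite /cst hm ifF; last by lia.
  rewrite ifT; last by lia.
  by rewrite (_ : ((m + n).+1 - n)%N = m.+1) //; lia.
have S3 : \sum_(2 * n <= m < 4 * n) cst m = (2 * n)%N%:R *+ (4 * n - 2 * n).
  rewrite -sumr_const_nat big_nat_cond [RHS]big_nat_cond.
  apply: eq_bigr => m /andP [/andP [hm _] _].
  by rewrite /cst ifF ?ifF //; lia.
rewrite S2 S3 S1.
have h := harm n.-1; rewrite prednK // in h.
have hn2 : 0 <= (n ^ 2)%N%:R :> R by rewrite ler0n.
have : (n ^ 2)%N%:R * \sum_(0 <= m < n) (((m.+1) ^ 2)%N%:R)^-1 <= (n ^ 2)%N%:R * 2 :> R.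
  apply: ler_wpM2l => //; apply: le_trans h _.
  by rewrite gerBl invr_ge0 ler0n.
have e : (2 * n)%N%:R *+ (4 * n - 2 * n) = (4 * n ^ 2)%N%:R :> R.
  by rewrite -mulr_natr -natrM; congr (_%:R); rewrite (_ : (4 * n - 2 * n = 2 * n)%N); [|lia]; ring.
rewrite e (_ : (8 * n ^ 2)%N%:R = (n ^ 2)%N%:R * 2 + (n ^ 2)%N%:R * 2 + (4 * n ^ 2)%N%:R :> R); first lra.
by rewrite -!natrM -!natrD; congr (_%:R); ring.
Qed.


Lemma natR_eq (a b : nat) : (a%:R = b%:R :> R) -> a = b.
Proof. by move/eqP; rewrite eqr_nat => /eqP. Qed.

Lemma phi_le x : (phi x <= 4 * n)%N.
Proof.
have := ones_le x; have := cnt_le Pa x; have := cnt_le Pb x.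
rewrite /phi /av /bv.
case: (ltnP (ones x) B); case: (ltnP B (ones x)); case: (ltnP 0 (cnt Pa x)) => *; lia.
Qed.

Lemma phi_pos x : ~~ opt x -> (0 < phi x)%N.
Proof.
move=> nx; rewrite /phi.
case: (ltnP (ones x) B) => h1; first lia.
case: (ltnP B (ones x)) => h2; first lia.
case: (ltnP 0 (av x)) => h3; first lia.
have ho : ones x = B by lia.
have ha : av x = 0%N by lia.
rewrite lt0n; apply/negP => /eqP hb; move: nx; by rewrite opt_of.
Qed.

Definition E x := fun z => (f z <= f x) && (opt z || (phi z < phi x)%N).

Lemma K_gt x i : W i < K.
Proof.
rewrite /K; apply: le_lt_trans (W_le i) _.
have : w n <= n%:R * w n.
  by rewrite ler_peMl ?ler1n // ltW // wn_pos.
lra.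
Qed.

Lemma exists_bit x (b : bool) : (if b then (0 < ones x)%N else (ones x < n)%N) ->
  exists i, x i = b.
Proof.
case: (pickP (fun i => x i == b)) => [i /eqP hi|h0]; first by exists i.
case: b h0 => h0.
  have -> : ones x = 0%N.
    apply: eq_card0 => k; rewrite inE; by have := h0 k; case: (x k).
  by [].
have -> : ones x = n.
  rewrite /ones -[RHS]card_ord; apply: eq_card => k; rewrite inE.
  by have := h0 k; case: (x k).
by rewrite ltnn.
Qed.

Lemma cstE_big x : (2 * n <= (phi x).-1)%N -> cst (phi x).-1 = (2 * n)%N%:R.
Proof. by move=> h; rewrite /cst !ifF //; lia. Qed.

Lemma prob_infeas x : (ones x < B)%N ->
  1 <= cst (phi x).-1 * \sum_(z | E x z) mut x z.
Proof.
move=> h1.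
have px : phi x = (3 * n + (B - ones x))%N by rewrite /phi h1.
rewrite cstE_big; last by rewrite px; lia.
have [i hi] := @exists_bit x false (leq_trans h1 HBn).
apply: (@single_bound R n x (flipS [set i] x)); first by rewrite hamming_flipS cards1.
have ho : ones (flipS [set i] x) = (ones x).+1.
  apply: natR_eq; rewrite onesR QF_flip1 -onesR hi /Fones /= subr0.
  by rewrite -natrD addn1.
have hf : fobj w (flipS [set i] x) = fobj w x + W i.
  by rewrite !fobjQ QF_flip1 hi /Fobj /= mul1r mul0r subr0.
apply/andP; split.
  rewrite !fpenE hf ho.
  have -> : (B - ones x)%N = ((B - (ones x).+1) + 1)%N by lia.
  rewrite natrD mulrDl mul1r; have := K_gt x i; lra.
apply/orP; right; rewrite px.
case: (ltnP (ones (flipS [set i] x)) B) => h2.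
  by rewrite /phi h2 ho; lia.
have := phi_feas h2; have := ones_le (flipS [set i] x); lia.
Qed.

Lemma prob_over x : (B < ones x)%N ->
  1 <= cst (phi x).-1 * \sum_(z | E x z) mut x z.
Proof.
move=> h1.
have px : phi x = (2 * n + (ones x - B))%N by rewrite /phi ltnNge ltnW //= h1.
rewrite cstE_big; last by rewrite px; lia.
have [i hi] := @exists_bit x true (leq_ltn_trans (leq0n B) h1).
apply: (@single_bound R n x (flipS [set i] x)); first by rewrite hamming_flipS cards1.
have ho : ones (flipS [set i] x) = (ones x).-1.
  apply: natR_eq; rewrite onesR QF_flip1 -onesR hi /Fones /= sub0r.
  rewrite -[in LHS](prednK (leq_ltn_trans (leq0n B) h1)) -addn1 natrD; ring.
have hf : fobj w (flipS [set i] x) = fobj w x - W i.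
  by rewrite !fobjQ QF_flip1 hi /Fobj /= mul1r mul0r sub0r.
apply/andP; split.
  rewrite !fpenE hf ho (_ : (B - (ones x).-1)%N = 0%N); last by lia.
  rewrite (_ : (B - ones x)%N = 0%N); last by lia.
  have := W_pos i; lra.
apply/orP; right; rewrite px.
have h2 : (B <= ones (flipS [set i] x))%N by rewrite ho; lia.
have := phi_feas h2; rewrite ho; lia.
Qed.


Lemma inj_pairs x (A C : {set 'I_n}) :
  (forall i, i \in A -> x i) -> (forall j, j \in C -> ~~ x j) ->
  {in setX A C &, injective (fun p : 'I_n * 'I_n => flipS [set p.1; p.2] x)}.
Proof.
move=> hA hC [i1 j1] [i2 j2]; rewrite !inE /= => /andP [a1 c1] /andP [a2 c2] e.
have := congr1 (diffs x) e; rewrite !diffs_flipS => es.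
have : i1 \in [set i2; j2] by rewrite -es !inE eqxx.
rewrite !inE => /orP [/eqP ei|/eqP h]; last first.
  by have := hA _ a1; rewrite h (negbTE (hC _ c2)).
have : j1 \in [set i2; j2] by rewrite -es !inE eqxx orbT.
rewrite !inE => /orP [/eqP h|/eqP ->]; last by rewrite ei.
by have := hC _ c1; rewrite h hA.
Qed.

Lemma ham_pair x i j : x i -> ~~ x j -> hamming x (flipS [set i; j] x) = 2%N.
Proof.
move=> hi hj; rewrite hamming_flipS cards2.
by case: eqP => // eij; move: hj; rewrite -eij hi.
Qed.

Lemma ones_swap x i j : x i -> ~~ x j -> ones (flipS [set i; j] x) = ones x.
Proof.
move=> hi hj; have ij : i != j by apply/eqP => e; move: hj; rewrite -e hi.
apply: natR_eq; rewrite !onesR QF_flip2 // hi (negbTE hj) /Fones /=; ring.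
Qed.

Lemma fobj_swap x i j : x i -> ~~ x j ->
  fobj w (flipS [set i; j] x) = fobj w x - W i + W j.
Proof.
move=> hi hj; have ij : i != j by apply/eqP => e; move: hj; rewrite -e hi.
rewrite !fobjQ QF_flip2 // hi (negbTE hj) /Fobj /=; ring.
Qed.

Lemma cnt_swap P x i j : x i -> ~~ x j ->
  (cnt P (flipS [set i; j] x))%:R =
  (cnt P x)%:R - (P true i)%:R + (P false i)%:R + (P true j)%:R - (P false j)%:R :> R.
Proof.
move=> hi hj; have ij : i != j by apply/eqP => e; move: hj; rewrite -e hi.
rewrite !cntR QF_flip2 // hi (negbTE hj) /=; ring.
Qed.

Lemma fpen_feas x : (B <= ones x)%N -> f x = fobj w x.
Proof.
by move=> h; rewrite fpenE (_ : (B - ones x)%N = 0%N) ?mul0r ?addr0 //; lia.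
Qed.

Lemma prob_swapA x : ones x = B -> (0 < av x)%N ->
  1 <= cst (phi x).-1 * \sum_(z | E x z) mut x z.
Proof.
move=> ho ha.
have px : phi x = (n + av x)%N by rewrite /phi ho ltnn /= ha.
have avn := cnt_le Pa x; rewrite -/(av x) in avn.
have -> : cst (phi x).-1 = (n ^ 2)%N%:R / ((av x) ^ 2)%N%:R.
  rewrite /cst px ifF; last by lia.
  by rewrite ifT; [rewrite (_ : ((n + av x).-1.+1 - n)%N = av x) //|]; lia.
set A := [set i | Pa (x i) i]; set C := [set j | (W j <= tB) && ~~ x j].
have hA : forall i, i \in A -> x i by move=> i; rewrite inE => /andP [].
have hC : forall j, j \in C -> ~~ x j by move=> j; rewrite inE => /andP [].
apply: (@pair_bound R n x (av x) (setX A C) (fun p : 'I_n * 'I_n => flipS [set p.1; p.2] x) (E x) ha); last first.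
- move=> [i j]; rewrite inE /= !inE => /andP [/andP [xi hWi] /andP [hWj xj]].
  split; first exact: ham_pair.
  set z := flipS _ x.
  have oz : ones z = ones x by apply: ones_swap.
  have fz : fobj w z = fobj w x - W i + W j by apply: fobj_swap.
  have az : ((av z).+1 = av x)%N.
    apply: natR_eq; rewrite -addn1 natrD /av cnt_swap // /Pa /= hWi.
    by rewrite (_ : (tB < W j) = false) /=; [ring | apply/negbTE; rewrite -leNgt].
  apply/andP; split.
    rewrite !fpen_feas ?oz ?ho // fz; lra.
  apply/orP; right; rewrite px /phi oz ho ltnn /=.
  have := cnt_le Pb z; rewrite /av /bv in az *.
  by case: (ltnP 0 (cnt Pa z)) => *; lia.
- exact: inj_pairs.
rewrite cardsX; apply: leq_mul => //.
have s1 := card_split (fun k => x k) (fun k => tB < W k).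
have s1' : #|[set k | x k && ~~ (tB < W k)]| = #|[set k | (W k <= tB) && x k]|.
  by apply: card_eqP => k; rewrite -leNgt andbC.
have s2 := card_split (fun k => W k <= tB) (fun k => x k).
have := card_leW.
rewrite /= in s1 s2.
rewrite /av /cnt /Pa /ones in ho ha *.
rewrite /C; move: s1 s1' s2 ho ha.
set a1 := #|[set k | x k && (tB < W k)]|.
set a2 := #|[set k | x k && ~~ (tB < W k)]|.
set a3 := #|[set k | (W k <= tB) && x k]|.
set a4 := #|[set k | (W k <= tB) && ~~ x k]|.
set a5 := #|[set k | W k <= tB]|.
set a6 := #|[set k | x k]|.
lia.
Qed.


Lemma prob_swapB x : ones x = B -> av x = 0%N -> (0 < bv x)%N ->
  1 <= cst (phi x).-1 * \sum_(z | E x z) mut x z.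
Proof.
move=> ho ha hb.
have px : phi x = bv x by rewrite /phi ho ltnn /= ha.
have bvn := cnt_le Pb x; rewrite -/(bv x) in bvn.
have -> : cst (phi x).-1 = (n ^ 2)%N%:R / ((bv x) ^ 2)%N%:R.
  by rewrite /cst px ifT ?prednK //; lia.
set A := [set i | (x i && ~~ (tB < W i)) && ~~ (W i < tB)].
set C := [set j | Pb (x j) j].
have hA : forall i, i \in A -> x i by move=> i; rewrite inE => /andP [/andP []].
have hC : forall j, j \in C -> ~~ x j by move=> j; rewrite inE => /andP [].
apply: (@pair_bound R n x (bv x) (setX A C) (fun p : 'I_n * 'I_n => flipS [set p.1; p.2] x) (E x) hb); last first.
- move=> [i j]; rewrite inE /= !inE => /andP [/andP [/andP [xi hi1] hi2] /andP [xj hWj]].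
  split; first exact: ham_pair.
  set z := flipS _ x.
  have eWi : W i = tB by apply/eqP; rewrite eq_le !leNgt hi1 hi2.
  have oz : ones z = ones x by apply: ones_swap.
  have fz : fobj w z = fobj w x - W i + W j by apply: fobj_swap.
  have tWj : (tB < W j) = false by apply/negbTE; rewrite -leNgt ltW.
  have az : av z = 0%N.
    apply: natR_eq; rewrite /av cnt_swap // /Pa /= (negbTE hi1) tWj.
    by rewrite -/(av x) ha; ring.
  have bz : ((bv z).+1 = bv x)%N.
    apply: natR_eq; rewrite -addn1 natrD /bv cnt_swap // /Pb /= (negbTE hi2) hWj.
    rewrite /= ; ring.
  apply/andP; split.
    rewrite !fpen_feas ?oz ?ho // fz; lra.
  apply/orP; right; rewrite px /phi oz ho ltnn /= az.
  by rewrite ltnn; lia.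
- exact: inj_pairs.
rewrite cardsX; apply: leq_mul => //.
have s1 := card_split (fun k => x k) (fun k => tB < W k).
have s2 := card_split (fun k => x k && ~~ (tB < W k)) (fun k => W k < tB).
have s2' : #|[set k | (x k && ~~ (tB < W k)) && (W k < tB)]| = #|[set k | (W k < tB) && x k]|.
  by apply: card_eqP => k; case: ltgtP; case: (x k).
have s3 := card_split (fun k => W k < tB) (fun k => x k).
have s3' : #|[set k | (W k < tB) && ~~ x k]| = #|[set k | ~~ x k && (W k < tB)]|.
  by apply: card_eqP => k; rewrite andbC.
have := card_ltW; rewrite -subn1.
rewrite /= in s1 s2 s3.
rewrite /av /bv /cnt /Pa /Pb /ones in ho ha hb *.
rewrite /A; move: s1 s2 s2' s3 s3' ho ha hb.
set a1 := #|[set k | x k && (tB < W k)]|.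
set a2 := #|[set k | x k && ~~ (tB < W k)]|.
set a3 := #|[set k | (x k && ~~ (tB < W k)) && (W k < tB)]|.
set a4 := #|[set k | (x k && ~~ (tB < W k)) && ~~ (W k < tB)]|.
set a5 := #|[set k | (W k < tB) && x k]|.
set a6 := #|[set k | (W k < tB) && ~~ x k]|.
set a7 := #|[set k | ~~ x k && (W k < tB)]|.
set a8 := #|[set k | W k < tB]|.
set a9 := #|[set k | x k]|.
lia.
Qed.

Lemma prob x : ~~ opt x -> 1 <= cst (phi x).-1 * \sum_(z | E x z) mut x z.
Proof.
move=> nx.
case: (ltnP (ones x) B) => h1; first exact: prob_infeas.
case: (ltnP B (ones x)) => h2; first exact: prob_over.
have ho : ones x = B by lia.
case: (ltnP 0 (av x)) => h3; first exact: prob_swapA.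
have ha : av x = 0%N by lia.
apply: prob_swapB => //; rewrite lt0n; apply/negP => /eqP hb.
by move: nx; rewrite opt_of.
Qed.

Lemma perx_cond x : ~~ opt x ->
  \sum_z mut x z * (if f z <= f x then (~~ opt z)%:R * gg z else gg x) <= gg x - 1.
Proof.
move=> nx.
have pp := phi_pos nx.
have GS : gg x = G (phi x).-1 + cst (phi x).-1 by rewrite /gg -G_S prednK.
apply: (@perx R n (mut x) _ (E x) (gg x) (cst (phi x).-1)).
- exact: mut_ge0.
- exact: sum_mut.
- exact: G_ge0.
- move=> z mz; rewrite /E; case: ifP => fz /=; last by rewrite mul0r subr0.
  case: (boolP (opt z)) => oz /=.
    rewrite mul0r mul1r GS; have := G_ge0 (phi x).-1; lra.
  rewrite mul1r; have := Mon mz fz.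
  case: (ltnP (phi z) (phi x)) => hp hle /=.
    rewrite mul1r GS addrK; apply: G_mono; lia.
  by rewrite mul0r subr0 /gg (_ : phi z = phi x) //; lia.
- exact: prob.
Qed.

End Problem.

Theorem theorem3 :
  exists (C : nat) (n0 : nat), forall (R : realFieldType) (n : nat)
    (w : nat -> R) (B : nat) (x0 : point n),
    (1 <= n)%N -> (n0 <= n)%N ->
    0 < w 1%N ->
    (forall i j : nat, (1 <= i)%N -> (i <= j)%N -> (j <= n)%N -> w i <= w j) ->
    (1 <= B)%N -> (B <= n)%N ->
    forall N : nat,
      \sum_(t < N) not_hit w B x0 t <= (C * n ^ 2)%N%:R.
Proof.
exists 8%N, 0%N => R n w B x0 Hn _ Hw1 Hmono HB1 HBn N.
apply: le_trans (@drift R n w B (gg w B) x0 N _ _) _.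
- by move=> x; apply: G_ge0.
- by move=> x nx; apply: (perx_cond Hn Hw1 Hmono HB1 HBn).
apply: le_trans _ (G_bound Hn Hw1 HB1 HBn).
by apply: G_mono; apply: (phi_le Hn Hw1 HB1 HBn).
Qed.
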